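(* Let $\mathcal{X},\mathcal{Y}\subset\mathbb{R}^d$ be finite sets in coupled general position and let $Q=Q_{\mathcal{X}}\sqcup Q_{\mathcal{Y}}$ be a simplex of $\mathcal{A}^{\mathrm{co}}_\infty(\mathcal{X},\mathcal{Y})$ with $|Q|=m+1$, $Q_{\mathcal{X}}=\{x_1,\dots,x_l\}\subset\mathcal{X}$ and $Q_{\mathcal{Y}}=\{y_1,\dots,y_{m-l+1}\}\subset\mathcal{Y}$ both nonempty. Consider the relaxed problem $$r_{\mathrm{rel}}^2(Q)=\min_{c\in\mathbb{R}^d}\max\{\|c-x_1\|^2,\|c-y_1\|^2\}\quad\text{subject to } Ac=b,$$ where $A$ is the matrix with rows $(x_2-x_1)^T,\dots,(x_l-x_1)^T,(y_2-y_1)^T,\dots,(y_{m-l+1}-y_1)^T$ and $b=\tfrac12\big(\|x_2\|^2-\|x_1\|^2,\dots,\|x_l\|^2-\|x_1\|^2,\|y_2\|^2-\|y_1\|^2,\dots,\|y_{m-l+1}\|^2-\|y_1\|^2\big)^T$ (so $Ac=b$ says $c$ is equidistant from all points of $Q_{\mathcal{X}}$ and equidistant from all points of $Q_{\mathcal{Y}}$). Let $c_0$ satisfy $Ac_0=b$, let $F\in\mathbb{R}^{d\times(d-m+1)}$ have orthonormal columns forming a basis of $\ker A$, and set $s_x=F^T(x_1-c_0)$, $s_y=F^T(y_1-c_0)$, and $r_x(x_1)=\|Fs_x+c_0-x_1\|$, $r_x(y_1)=\|Fs_x+c_0-y_1\|$, $r_y(x_1)=\|Fs_y+c_0-x_1\|$,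 $r_y(y_1)=\|Fs_y+c_0-y_1\|$. Then $$r_{\mathrm{rel}}(Q)=\begin{cases} r_x(x_1) & \text{if } r_x(x_1)\ge r_x(y_1),\\ r_y(y_1) & \text{if } r_y(x_1)\le r_y(y_1),\\ R(Q) & \text{otherwise},\end{cases}$$ where $R(Q)$ is the radius of the minimal circumsphere of $Q$ in $\mathbb{R}^d$ (the smallest sphere in $\mathbb{R}^d$ passing through all points of $Q$).
   Context: For finite $\mathcal{Z}\subset\mathbb{R}^d$, $\mathrm{Vor}(z,\mathcal{Z})=\{w:\|z-w\|\le\|z'-w\|\ \forall z'\in\mathcal{Z}\}$. $\mathcal{A}^{\mathrm{co}}_\infty(\mathcal{X},\mathcal{Y})$ is the abstract simplicial complex on the disjoint union of $\mathcal{X}$ and $\mathcal{Y}$ consisting of all $Q=Q_{\mathcal{X}}\sqcup Q_{\mathcal{Y}}$ with $\bigcap_{x\in Q_{\mathcal{X}}}\mathrm{Vor}(x,\mathcal{X})\cap\bigcap_{y\in Q_{\mathcal{Y}}}\mathrm{Vor}(y,\mathcal{Y})\ne\emptyset$. A finite $P\subset\mathbb{R}^d$ is in general position if for every $Q\subset P$ with $|Q|=d+1$ the points of $Q$ do not lie on a $(d-1)$-dimensional affine flat and no point of $P\setminus Q$ lies on the circumsphere of $Q$. $P_1,P_2$ are in coupled general position if each is in general position and, with $\hat P_1=P_1\times\{0\}$, $\hat P_2=P_2\times\{1\}\subset\mathbb{R}^{d+1}$, for all $\hat Q_1\subset\hat P_1,\hat Q_2\subset\hat P_2$ with $|\hat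 Q_1\cup\hat Q_2|=d+2$, no point of $(\hat P_1\setminus\hat Q_1)\cup(\hat P_2\setminus\hat Q_2)$ lies on the circumsphere of $\hat Q_1\cup\hat Q_2$. Under these assumptions the rows of $A$ are linearly independent. *)

(* Defs.v *)
From HB Require Import structures.
From mathcomp Require Import all_boot all_order all_algebra.
From mathcomp Require Import classical_sets boolp reals.
Set Implicit Arguments. Unset Strict Implicit. Unset Printing Implicit Defensive.
Import Order.TTheory GRing.Theory Num.Theory.
Local Open Scope ring_scope.
Local Open Scope classical_set_scope.

Section Defs.
Variable R : realType.

Definition norm2 {n} (v : 'cV[R]_n) : R := \sum_(i < n) v i 0 ^+ 2.
Definition enorm {n} (v : 'cV[R]_n) : R := Num.sqrt (norm2 v).

Definition Vor {n} (z : 'cV[R]_n) (Z : seq 'cV[R]_n) : set 'cV[R]_n :=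
  [set w | forall z', z' \in Z -> enorm (z - w) <= enorm (z' - w)].

Definition on_hyperplane {n} (S : seq 'cV[R]_n) : Prop :=
  exists (a : 'cV[R]_n) (beta : R), a != 0 /\
    forall q, q \in S -> (a^T *m q) 0 0 = beta.

Definition on_circumsphere {n} (S : seq 'cV[R]_n) (p : 'cV[R]_n) : Prop :=
  exists (c : 'cV[R]_n) (r : R),
    (forall q, q \in S -> enorm (c - q) = r) /\ enorm (c - p) = r.

Definition general_position {n} (P : seq 'cV[R]_n) : Prop :=
  forall Q : seq 'cV[R]_n, uniq Q -> {subset Q <= P} -> size Q = n.+1 ->
    ~ on_hyperplane Q /\
    (forall p, p \in P -> p \notin Q -> ~ on_circumsphere Q p).

Definition hlift {n} (t : R) (p : 'cV[R]_n) : 'cV[R]_(n + 1) :=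
  col_mx p (const_mx t).

Definition coupled_general_position {n} (P1 P2 : seq 'cV[R]_n) : Prop :=
  general_position P1 /\ general_position P2 /\
  forall Q1 Q2 : seq 'cV[R]_n,
    uniq Q1 -> uniq Q2 -> {subset Q1 <= P1} -> {subset Q2 <= P2} ->
    size Q1 + size Q2 = n.+2 ->
    let hQ := map (hlift 0) Q1 ++ map (hlift 1) Q2 in
    (forall p, p \in P1 -> p \notin Q1 -> ~ on_circumsphere hQ (hlift 0 p)) /\
    (forall p, p \in P2 -> p \notin Q2 -> ~ on_circumsphere hQ (hlift 1 p)).

(* Q = {x_0..x_l} (from X) ⊔ {y_0..y_k} (from Y) is a simplex of A^co_oo(X,Y) *)
Definition cosimplex {n l k} (X Y : seq 'cV[R]_n)
    (x : 'I_l.+1 -> 'cV[R]_n) (y : 'I_k.+1 -> 'cV[R]_n) : Prop :=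
  injective x /\ injective y /\ (forall i, x i \in X) /\ (forall j, y j \in Y) /\
  exists w, (forall i, Vor (x i) X w) /\ (forall j, Vor (y j) Y w).

Definition Amat {n l k} (x : 'I_l.+1 -> 'cV[R]_n) (y : 'I_k.+1 -> 'cV[R]_n)
    : 'M[R]_(l + k, n) :=
  col_mx (\matrix_(i < l) (x (lift ord0 i) - x ord0)^T)
         (\matrix_(j < k) (y (lift ord0 j) - y ord0)^T).

Definition bvec {n l k} (x : 'I_l.+1 -> 'cV[R]_n) (y : 'I_k.+1 -> 'cV[R]_n)
    : 'cV[R]_(l + k) :=
  col_mx (\col_(i < l) (2^-1 * (norm2 (x (lift ord0 i)) - norm2 (x ord0))))
         (\col_(j < k) (2^-1 * (norm2 (y (lift ord0 j)) - norm2 (y ord0)))).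

Definition rrel {n l k} (x : 'I_l.+1 -> 'cV[R]_n) (y : 'I_k.+1 -> 'cV[R]_n) : R :=
  Num.sqrt (inf [set Num.max (norm2 (c - x ord0)) (norm2 (c - y ord0)) |
                 c in [set c | Amat x y *m c = bvec x y]]).

Definition Rcirc {n l k} (x : 'I_l.+1 -> 'cV[R]_n) (y : 'I_k.+1 -> 'cV[R]_n) : R :=
  inf [set r | exists c : 'cV[R]_n,
          (forall i, enorm (c - x i) = r) /\ (forall j, enorm (c - y j) = r)].

End Defs.

(* Main.v *)
Require Import Defs.
From HB Require Import structures.
From mathcomp Require Import all_boot all_order all_algebra.
From mathcomp Require Import classical_sets boolp reals.
From mathcomp Require Import ring lra.
Import Order.TTheory GRing.Theory Num.Theory.
Local Open Scope ring_scope.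
Local Open Scope classical_set_scope.

Section Aux.
Variable R : realType.

Lemma inf_minE (E : set R) a : E a -> (forall z, E z -> a <= z) -> inf E = a.
Proof.
move=> Ea lb; apply/le_anti/andP; split.
  by apply: ge_inf => //; exists a.
by apply: lb_le_inf => //; exists a.
Qed.

Definition dot {n} (u v : 'cV[R]_n) : R := \sum_(i < n) u i 0 * v i 0.

Lemma dot_mx {n} (u v : 'cV[R]_n) : dot u v = (u^T *m v) 0 0.
Proof. by rewrite mxE /dot; apply: eq_bigr => i _; rewrite mxE. Qed.

Lemma norm2_dot {n} (u : 'cV[R]_n) : norm2 u = dot u u.
Proof. by rewrite /norm2 /dot; apply: eq_bigr => i _; rewrite expr2. Qed.

Lemma norm2D {n} (u v : 'cV[R]_n) : norm2 (u + v) = norm2 u + 2 * dot u v + norm2 v.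
Proof.
rewrite /norm2 /dot mulr_sumr -!big_split /=; apply: eq_bigr => i _.
by rewrite !mxE; ring.
Qed.

Lemma norm2N {n} (u : 'cV[R]_n) : norm2 (- u) = norm2 u.
Proof. by rewrite /norm2; apply: eq_bigr => i _; rewrite mxE sqrrN. Qed.

Lemma dotN {n} (u v : 'cV[R]_n) : dot u (- v) = - dot u v.
Proof. by rewrite /dot -sumrN; apply: eq_bigr => i _; rewrite mxE mulrN. Qed.

Lemma dotZ {n} (a : R) (u v : 'cV[R]_n) : dot (a *: u) v = a * dot u v.
Proof. by rewrite /dot mulr_sumr; apply: eq_bigr => i _; rewrite mxE mulrA. Qed.

Lemma norm2Z {n} (a : R) (u : 'cV[R]_n) : norm2 (a *: u) = a ^+ 2 * norm2 u.
Proof. by rewrite /norm2 mulr_sumr; apply: eq_bigr => i _; rewrite mxE exprMn. Qed.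

Lemma norm2_ge0 {n} (u : 'cV[R]_n) : 0 <= norm2 u.
Proof. by rewrite /norm2 sumr_ge0 // => i _; rewrite sqr_ge0. Qed.

Lemma dotF {n m} (F : 'M[R]_(n, m)) s w : F^T *m w = 0 -> dot (F *m s) w = 0.
Proof.
by move=> h; rewrite dot_mx trmx_mul -mulmxA h mulmx0 mxE.

Qed.

Lemma dotC {n} (u v : 'cV[R]_n) : dot u v = dot v u.
Proof. by rewrite /dot; apply: eq_bigr => i _; rewrite mulrC. Qed.

Lemma dotDl {n} (u v w : 'cV[R]_n) : dot (u + v) w = dot u w + dot v w.
Proof. by rewrite /dot -big_split; apply: eq_bigr => i _; rewrite mxE mulrDl. Qed.

Lemma dotNl {n} (u v : 'cV[R]_n) : dot (- u) v = - dot u v.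
Proof. by rewrite dotC dotN dotC. Qed.

Lemma norm2B {n} (c p : 'cV[R]_n) : norm2 (c - p) = norm2 c - 2 * dot p c + norm2 p.
Proof. by rewrite norm2D dotN norm2N dotC; ring. Qed.

Lemma row_equiv {n} (c p q : 'cV[R]_n) :
  (((p - q)^T *m c) 0 0 = 2^-1 * (norm2 p - norm2 q)) <->
  norm2 (c - p) = norm2 (c - q).
Proof.
rewrite -dot_mx dotDl dotNl !norm2B; split => h.
  have -> : dot p c = dot q c + 2^-1 * (norm2 p - norm2 q) by rewrite -h; ring.
  by field.
have : 2 * (dot p c - dot q c) = norm2 p - norm2 q by lra.
by move=> e; rewrite -e; field.
Qed.

Lemma equidist {n l k} (x : 'I_l.+1 -> 'cV[R]_n) (y : 'I_k.+1 -> 'cV[R]_n) c :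
  Amat x y *m c = bvec x y <->
  (forall i, norm2 (c - x i) = norm2 (c - x ord0)) /\
  (forall j, norm2 (c - y j) = norm2 (c - y ord0)).
Proof.
rewrite /Amat /bvec mul_col_mx.
have rowE : forall m r (v : 'I_r -> 'cV[R]_n) (e : 'I_r -> R),
   (\matrix_(i < r) (v i - m)^T) *m c = \col_(i < r) e i <->
   (forall i, ((v i - m)^T *m c) 0 0 = e i).
  move=> m r v e; split.
    by move=> h i; move/matrixP: h => /(_ i 0); rewrite !mxE => <-; apply: eq_bigr => j _; rewrite !mxE.
  by move=> h; apply/matrixP => i j; rewrite (ord1 j) !mxE -h mxE; apply: eq_bigr => j' _; rewrite !mxE.
have liftE : forall r (P : 'I_r.+1 -> Prop), P ord0 -> ((forall i, P (lift ord0 i)) <-> forall i, P i).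
  move=> r P P0; split => h; last by move=> i; apply: h.
  by move=> i0; case: (unliftP ord0 i0) => [j ->|->].
split.
  case/eq_col_mx => /rowE h1 /rowE h2; split.
    by apply/(liftE _ _ erefl) => i; apply/row_equiv; rewrite h1.
  by apply/(liftE _ _ erefl) => i; apply/row_equiv; rewrite h2.
case=> h1 h2; congr col_mx; apply/rowE => i; apply/row_equiv; [exact: h1|exact: h2].
Qed.

End Aux.

Arguments dot {R n}.
Local Close Scope classical_set_scope.
Theorem mainTheorem3 (R : realType) (d l k : nat) (X Y : seq 'cV[R]_d)
    (x : 'I_l.+1 -> 'cV[R]_d) (y : 'I_k.+1 -> 'cV[R]_d)
    (hXY : coupled_general_position X Y)
    (hQ : cosimplex X Y x y)
    (c0 : 'cV[R]_d) (hc0 : Amat x y *m c0 = bvec x y)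
    (F : 'M[R]_(d, d - (l + k)))
    (hFon : F^T *m F = 1%:M)
    (hFker : forall c : 'cV[R]_d, Amat x y *m c = 0 <-> exists s, c = F *m s) :
  let x1 := x ord0 in
  let y1 := y ord0 in
  let sx := F^T *m (x1 - c0) in
  let sy := F^T *m (y1 - c0) in
  let rx_x1 := enorm (F *m sx + c0 - x1) in
  let rx_y1 := enorm (F *m sx + c0 - y1) in
  let ry_x1 := enorm (F *m sy + c0 - x1) in
  let ry_y1 := enorm (F *m sy + c0 - y1) in
  (rx_x1 >= rx_y1 -> rrel x y = rx_x1) /\
  (ry_x1 <= ry_y1 -> rrel x y = ry_y1) /\
  (~ (rx_x1 >= rx_y1) -> ~ (ry_x1 <= ry_y1) -> rrel x y = Rcirc x y).
Proof.
move=> x1 y1 sx sy rx_x1 rx_y1 ry_x1 ry_y1.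
set feas := fun c : 'cV[R]_d => exists s, c = c0 + F *m s.
have feasE : forall c, Amat x y *m c = bvec x y <-> feas c.
  move=> c; split.
    move=> h; have /hFker [s hs] : Amat x y *m (c - c0) = 0 by rewrite mulmxBr h hc0 subrr.
    by exists s; rewrite -hs addrC subrK.
  by case=> s ->; rewrite mulmxDr hc0 (proj2 (hFker _)) ?addr0 //; exists s.
have fdiff : forall c c', feas c -> feas c' -> exists s, c - c' = F *m s.
  move=> c c' [s ->] [s' ->]; exists (s - s'); rewrite mulmxBr; by rewrite opprD addrACA subrr add0r.
have orth : forall c c' e, feas c -> feas c' -> F^T *m e = 0 -> dot (c - c') e = 0.
  move=> c c' e fc fc' he; have [s ->] := fdiff _ _ fc fc'; exact: dotF.
set f := fun c : 'cV[R]_d => Num.max (norm2 (c - x1)) (norm2 (c - y1)).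
have rrelE : forall m cs, feas cs -> f cs = m -> (forall c, feas c -> m <= f c) -> rrel x y = Num.sqrt m.
  move=> m cs fcs fm lb; rewrite /rrel; congr Num.sqrt; apply: inf_minE.
    by exists cs => //; apply/feasE.
  by move=> z [c /feasE fc <-]; apply: lb.
set cx := F *m sx + c0; set cy := F *m sy + c0.
have fcx : feas cx by exists sx; rewrite addrC.
have fcy : feas cy by exists sy; rewrite addrC.
have ortP : forall p, F^T *m (F *m (F^T *m (p - c0)) + c0 - p) = 0.
  move=> p; rewrite -addrA mulmxDr mulmxA hFon mul1mx -mulmxDr.
  by rewrite addrA subrK subrr mulmx0.
have ox : F^T *m (cx - x1) = 0 by apply: ortP.
have oy : F^T *m (cy - y1) = 0 by apply: ortP.
have decomp : forall c p cp, feas c -> feas cp -> F^T *m (cp - p) = 0 ->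
    norm2 (c - p) = norm2 (c - cp) + norm2 (cp - p).
  move=> c p cp fc fcp o; have -> : c - p = (c - cp) + (cp - p) by rewrite addrA subrK.
  by rewrite norm2D orth // mulr0 addr0.
have n2le : forall a b : 'cV[R]_d, enorm a <= enorm b -> norm2 a <= norm2 b.
  by move=> a b; rewrite /enorm ler_sqrt // norm2_ge0.
have n2le' : forall a b : 'cV[R]_d, norm2 a <= norm2 b -> enorm a <= enorm b.
  by move=> a b; rewrite /enorm ler_sqrt // norm2_ge0.
split.
  move=> h; rewrite (rrelE (norm2 (cx - x1)) cx) //.
  - rewrite /f; apply/max_idPl; exact: n2le.
  - move=> c fc; rewrite /f le_max (decomp c x1 cx) // lerDr norm2_ge0 //.
split.
  move=> h; rewrite (rrelE (norm2 (cy - y1)) cy) //.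
  - rewrite /f; apply/max_idPr; exact: n2le.
  - move=> c fc; rewrite /f le_max (decomp c y1 cy) // lerDr norm2_ge0 orbT //.
move=> h1 h2.
have lt1 : norm2 (cx - x1) < norm2 (cx - y1).
  by rewrite ltNge; apply/negP => /n2le' ; apply: h1.
have lt2 : norm2 (cy - y1) < norm2 (cy - x1).
  by rewrite ltNge; apply/negP => /n2le' ; apply: h2.
set ax := norm2 (cx - x1); set ay := norm2 (cy - y1).
set D := cy - cx; set dl := norm2 D.
have e1 : norm2 (cx - y1) = dl + ay.
  rewrite (decomp cx y1 cy) // /dl /D -norm2N opprB //.
have e2 : norm2 (cy - x1) = dl + ax.
  by rewrite (decomp cy x1 cx).
rewrite e1 in lt1; rewrite e2 in lt2.
have {lt1}lt1 : ax < dl + ay by exact: lt1.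
have {lt2}lt2 : ay < dl + ax by exact: lt2.
have dl0 : 0 < dl.
  lra.
set t := (dl + ay - ax) / (2 * dl).
have ht : t * (2 * dl) = dl + ay - ax by rewrite /t mulfVK // mulf_neq0 // gt_eqF.
have t0 : 0 < t by rewrite /t divr_gt0 //; lra.
have t1 : t < 1 by rewrite /t ltr_pdivrMr ?mul1r; lra.
have [sD hsD0] := fdiff _ _ fcy fcx.
have hsD : D = F *m sD by exact: hsD0.
set cs := cx + t *: D.
have fcs : feas cs.
  exists (sx + t *: sD); rewrite /cs hsD mulmxDr -scalemxAr /cx.
  by rewrite addrA (addrC c0).
have oD : forall e, F^T *m e = 0 -> dot D e = 0.
  by move=> e he; rewrite hsD; apply: dotF.
set m := t ^+ 2 * dl + ax.
have ex1 : norm2 (cs - x1) = m.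
  have -> : cs - x1 = t *: D + (cx - x1).
    by apply/matrixP => i j; rewrite /cs !mxE; ring.
  by rewrite norm2D dotZ oD // mulr0 mulr0 addr0 norm2Z.
have ey1 : norm2 (cs - y1) = m.
  have -> : cs - y1 = (t - 1) *: D + (cy - y1).
    by apply/matrixP => i j; rewrite /cs /D !mxE; ring.
  rewrite norm2D dotZ oD // mulr0 mulr0 addr0 norm2Z /m.
  apply/eqP; rewrite -subr_eq0; apply/eqP.
  transitivity (-(t*(2*dl)) + dl + ay - ax); first by rewrite -/dl -/ay; ring.
  by rewrite ht; ring.
have lbm : forall c, feas c -> m <= f c.
  move=> c fc.
  have hn1 : norm2 (c - x1) = norm2 (c - cx) + ax by rewrite (decomp c x1 cx).
  have hn2 : norm2 (c - y1) = norm2 (c - cy) + ay by rewrite (decomp c y1 cy).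
  have hu : norm2 (c - cy) = norm2 (c - cx) - 2 * dot (c - cx) D + dl.
    have -> : c - cy = (c - cx) + - D by apply/matrixP => i j; rewrite /D !mxE; ring.
    by rewrite norm2D dotN norm2N -/dl; ring.
  have hv : 0 <= norm2 (c - cx) - 2 * t * dot (c - cx) D + t ^+ 2 * dl.
    have := @norm2_ge0 R _ ((c - cx) + - (t *: D)).
    have dZ : dot (c - cx) (t *: D) = t * dot (c - cx) D by rewrite dotC dotZ dotC.
    rewrite norm2D dotN norm2N norm2Z dZ -/dl; lra.
  have f1 : norm2 (c - x1) <= f c by rewrite /f le_max lexx.
  have f2 : norm2 (c - y1) <= f c by rewrite /f le_max lexx orbT.
  have p1 : 0 <= (1 - t) * (f c - norm2 (c - x1)) by apply: mulr_ge0; lra.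
  have p2 : 0 <= t * (f c - norm2 (c - y1)) by apply: mulr_ge0; lra.
  rewrite /m; nra.
rewrite (rrelE m cs) //; last by rewrite /f ex1 ey1 maxxx.
symmetry; apply: inf_minE.
  exists cs; move/feasE: fcs => /equidist [hx hy]; split.
    by move=> i; rewrite /enorm hx -/x1 ex1.
  by move=> j; rewrite /enorm hy -/y1 ey1.
move=> z [c [hx hy]].
have eqn : forall a b : 'cV[R]_d, enorm a = enorm b -> norm2 a = norm2 b.
  by move=> a b /eqP; rewrite /enorm eqr_sqrt ?norm2_ge0 // => /eqP.
have fc : feas c.
  apply/feasE/equidist; split.
    by move=> i; apply: eqn; rewrite hx hx.
  by move=> j; apply: eqn; rewrite hy hy.
have := lbm c fc; rewrite /f (eqn _ _ (etrans (hx ord0) (esym (hy ord0)))) maxxx.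
by rewrite -(hx ord0) /enorm ler_sqrt ?norm2_ge0 // (eqn _ _ (etrans (hx ord0) (esym (hy ord0)))).
Qed.
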